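(* Let $n\in\mathbb N$ and suppose $\vartheta_n\equiv1$. For $h\in\mathsf F(\mathcal X_n)$ let $\bar h(\bar x_n)=h(\bar x^2_n)$. Then $\bar\eta_n\bar h=\eta_nh$ and, for every $\ell\in\llbracket0,n\rrbracket$, $\bar\sigma^2_{\ell,n}(\bar h)=\sigma^2_{\ell,n}(h)$. More generally, for every $m\in\mathbb N^*$ and every $f\in\mathsf F(\mathcal X_m)$ with $\bar f(\bar x_m)=f(\bar x^2_m)$, one has $\bar\eta_m\bar f=\eta_m(\vartheta_mf)/\eta_m\vartheta_m$.
   Context: Notation: $\mathbb N=\{0,1,2,\dots\}$, $\mathbb N^*=\mathbb N\setminus\{0\}$; $\llbracket m,n\rrbracket=\{k\in\mathbb N: m\le k\le n\}$; for a measure $\mu$, a (possibly unnormalised) kernel $K$ and a bounded measurable $h$: $\mu h=\int h\,d\mu$, $Kh(x)=\int h(y)K(x,dy)$, $\mu K(A)=\int K(x,A)\mu(dx)$, $KL(x,A)=\int K(x,dy)L(y,A)$. $\mathsf F(\mathcal X)$ denotes the set of bounded measurable real functions on $(\mathsf X,\mathcal X)$. Model: $(\mathsf X_n,\mathcal X_n)_{n\in\mathbb N}$ are measurable spaces; for each $n$, $L_n:\mathsf X_n\times\mathcal X_{n+1}\to\mathbb R_+$ is a kernel with $\sup_{x}L_n\mathbf 1_{\mathsf X_{n+1}}(x)<\infty$; $L_{k:m}=L_kL_{k+1}\cdots L_m$ if $k\le m$ and $L_{k:m}=\mathrm{id}$ otherwise; $\chi$ is a finite measure on $\mathcal X_0$;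 $\eta_n=\chi L_{0:n-1}/(\chi L_{0:n-1}\mathbf 1_{\mathsf X_n})$ (normalising constants assumed positive and finite). Algorithmic ingredients: a probability measure $\nu$ on $\mathcal X_0$ with $\chi\ll\nu$ and $w_{-1}=d\chi/d\nu$; measurable positive functions $\vartheta_n$ on $\mathsf X_n$ (adjustment multipliers); Markov kernels $P_n$ from $\mathsf X_n$ to $\mathcal X_{n+1}$ and measurable $w_n:\mathsf X_n\times\mathsf X_{n+1}\to\mathbb R_+$ with $\int h(y)L_n(x,dy)=\int h(y)w_n(x,y)P_n(x,dy)$ for all $x\in\mathsf X_n$, $h\in\mathsf F(\mathcal X_{n+1})$. Assume all quantities below are finite (e.g. $\vartheta_m$, $w_m/\vartheta_m$, $w_{-1}$ bounded). Asymptotic variance: for $h\in\mathsf F(\mathcal X_n)$ and $\ell\in\llbracket0,n\rrbracket$, $$\sigma^2_{\ell,n}(h)=\mathbf 1_{\{\ell=0\}}\frac{\chi\big(w_{-1}\{L_{0:n-1}(h-\eta_nh)\}^2\big)}{(\chi L_{0:n-1}\mathbf 1_{\mathsf X_n})^2}+\sum_{m=(\ell-1)\vee0}^{n-1}\eta_m\vartheta_m\,\frac{\int\eta_m(dx)\,\vartheta_m(x)^{-1}\int L_m(x,dy)\,w_m(x,y)\{L_{m+1:n-1}(h-\eta_nh)(y)\}^2}{(\eta_mL_{m:n-1}\mathbf 1_{\mathsf X_n})^2}.$$ Auxiliary Feynman–Kac model: $\bar{\mathsf X}_0=\mathsf X_0$ and $\bar{\mathsf X}_n=\mathsf X_{n-1}\times\mathsf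 X_n$ for $n\ge1$, elements $\bar x_n=(\bar x^1_n,\bar x^2_n)$, with the convention $\bar x_0^2=\bar x_0$. Potentials $\bar g_0(x_0)=\vartheta_0(x_0)w_{-1}(x_0)$ and $\bar g_n(\bar x_n)=w_{n-1}(\bar x_n^1,\bar x_n^2)\vartheta_n(\bar x_n^2)/\vartheta_{n-1}(\bar x^1_n)$ for $n\ge1$; Markov kernels $\bar M_n(\bar x_n,d\bar x_{n+1})=\delta_{\bar x^2_n}(d\bar x^1_{n+1})\,P_n(\bar x^1_{n+1},d\bar x^2_{n+1})$. Set $\bar L_n(\bar x_n,d\bar x_{n+1})=\bar M_n(\bar x_n,d\bar x_{n+1})\bar g_{n+1}(\bar x_{n+1})$, $\bar L_{k:m}$ the corresponding products, $\bar\chi(d\bar x_0)=\bar g_0(\bar x_0)\nu(d\bar x_0)$ and $\bar\eta_m=\bar\chi\bar L_{0:m-1}/\bar\chi\bar L_{0:m-1}\mathbf 1$. Let $\bar\sigma^2_{\ell,n}$ denote the asymptotic variance formula above applied to this auxiliary model with initial measure $\bar\chi$, kernels $\bar L_m$, initial density $\bar g_0$ in place of $w_{-1}$, adjustment multipliers identically $1$, and $\bar g_{m+1}(\bar y)$ in place of $w_m(x,y)$, i.e. $$\bar\sigma^2_{\ell,n}(\bar h)=\mathbf 1_{\{\ell=0\}}\frac{\bar\chi(\bar g_0\{\bar L_{0:n-1}(\bar h-\bar\eta_n\bar h)\}^2)}{(\bar\chi\bar L_{0:n-1}\mathbf 1)^2}+\sum_{m=(\ell-1)\vee0}^{n-1}\frac{\bar\eta_m\bar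 L_m(\bar g_{m+1}\{\bar L_{m+1:n-1}(\bar h-\bar\eta_n\bar h)\}^2)}{(\bar\eta_m\bar L_{m:n-1}\mathbf 1)^2}.$$ *)

(* Defs.v *)
From HB Require Import structures.
From mathcomp Require Import all_boot all_order all_algebra.
From mathcomp Require Import all_classical all_reals all_analysis.
From Stdlib Require Import PeanoNat.


Import Order.TTheory GRing.Theory Num.Theory.
Local Open Scope ring_scope.

(* Generic Feynman-Kac quantities, expressed through the action of the  *)
(* initial measure on functions ([chi h] = chi h) and the action of the *)
(* kernels on functions ([Lop n h x] = L_n h (x)).                      *)
Section GenericFK.
Variables (R : realType) (X : nat -> Type).
Variable chi : (X 0 -> R) -> R.
Variable Lop : forall n, (X n.+1 -> R) -> X n -> R.

(* Lgap j k h = L_k L_{k+1} ... L_{k+j-1} h  (h a function on X_(j+k)) *)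
Fixpoint Lgap (j k : nat) : (X (Nat.add j k) -> R) -> X k -> R :=
  match j return (X (Nat.add j k) -> R) -> X k -> R with
  | 0 => fun h => h
  | S j' => fun h => Lgap j' k (Lop (Nat.add j' k) h)
  end.

Definition castX (m n : nat) (e : m = n) (h : X n -> R) : X m -> R :=
  eq_rect_r (fun p => X p -> R) h e.

(* Lfrom k n h = L_{k:n-1} h, for k <= n  (identity when k = n);
   for k > n (never used) it is 0. *)
Definition Lfrom (k n : nat) (h : X n -> R) : X k -> R :=
  match Nat.eq_dec (Nat.add (Nat.sub n k) k) n with
  | left e => Lgap (Nat.sub n k) k (castX _ _ e h)
  | right _ => fun _ => 0
  end.

Definition FKeta (n : nat) (h : X n -> R) : R :=
  chi (Lfrom 0 n h) / chi (Lfrom 0 n (fun _ => 1)).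

Variable w0 : X 0 -> R.
Variable theta : forall n, X n -> R.
Variable w : forall n, X n -> X n.+1 -> R.

Definition FKsigma2 (l n : nat) (h : X n -> R) : R :=
  let hc := fun x => h x - FKeta n h in
  (if l == 0%N then
     chi (fun x => w0 x * (Lfrom 0 n hc x) ^+ 2)
       / (chi (Lfrom 0 n (fun _ => 1))) ^+ 2
   else 0)
  + \sum_(l.-1 <= m < n)
      (FKeta m (theta m)
       * FKeta m (fun x => (theta m x)^-1
                 * Lop m (fun y => w m x y * (Lfrom m.+1 n hc y) ^+ 2) x)
       / (FKeta m (Lfrom m n (fun _ => 1))) ^+ 2).

End GenericFK.

Section Model.
Local Open Scope ereal_scope.
Variables (R : realType) (d : nat -> measure_display)
  (X : forall n, measurableType (d n)).

Definition XT (n : nat) : Type := X n.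

Definition chiF (chi : {finite_measure set X 0 -> \bar R}) (h : XT 0 -> R) : R :=
  fine (\int[chi]_x (h x)%:E).

Definition LF (L : forall n, R.-fker (X n) ~> (X n.+1))
  (n : nat) (h : XT n.+1 -> R) (x : XT n) : R :=
  fine (\int[L n x]_y (h y)%:E).

Definition barX (n : nat) : Type :=
  match n with 0 => XT 0 | S p => (XT p * XT p.+1)%type end.

Definition snd2 (n : nat) : barX n -> XT n :=
  match n return barX n -> XT n with
  | 0 => fun x => x
  | S p => fun x => x.2
  end.

Definition gbar (wm1 : XT 0 -> R) (theta : forall n, XT n -> R)
  (w : forall n, XT n -> XT n.+1 -> R) (n : nat) : barX n -> R :=
  match n return barX n -> R with
  | 0 => fun x => (theta 0 x * wm1 x)%R
  | S p => fun x => (w p x.1 x.2 * theta p.+1 x.2 / theta p x.1)%R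
  end.

Definition chibar (nu : probability (X 0) R) (wm1 : XT 0 -> R)
  (theta : forall n, XT n -> R) (w : forall n, XT n -> XT n.+1 -> R)
  (h : barX 0 -> R) : R :=
  fine (\int[nu]_x (gbar wm1 theta w 0 x * h x)%:E).

(* \bar L_n h (xb) = int delta_{xb^2}(dx') P_n(x', dy) \bar g_{n+1}(x',y) h(x',y)
                   = int P_n(xb^2, dy) \bar g_{n+1}(xb^2, y) h(xb^2, y) *)
Definition Lbar (P : forall n, R.-pker (X n) ~> (X n.+1)) (wm1 : XT 0 -> R)
  (theta : forall n, XT n -> R) (w : forall n, XT n -> XT n.+1 -> R)
  (n : nat) (h : barX n.+1 -> R) (xb : barX n) : R :=
  fine (\int[P n (snd2 n xb)]_y
          (gbar wm1 theta w n.+1 ((snd2 n xb, y) : barX n.+1)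
           * h ((snd2 n xb, y) : barX n.+1))%:E).

End Model.

Arguments Lgap {R} X Lop j k _ _.
Arguments castX {R} X m n e h _.
Arguments Lfrom {R} X Lop k n h _.
Arguments FKeta {R} X chi Lop n h.
Arguments FKsigma2 {R} X chi Lop w0 theta w l n h.
Arguments XT {d} X n.
Arguments chiF {R d X} chi h.
Arguments LF {R d X} L n h x.
Arguments barX {d} X n.
Arguments snd2 {d} X n _.
Arguments gbar {R d} X wm1 theta w n _.
Arguments chibar {R d X} nu wm1 theta w h.
Arguments Lbar {R d X} P wm1 theta w n h xb.

(* Main.v *)
Require Import Defs.
From HB Require Import structures.
From mathcomp Require Import all_boot all_order all_algebra.
From mathcomp Require Import all_classical all_reals all_analysis.
From mathcomp Require Import measurable_realfun lebesgue_measure lebesgue_integral.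
From mathcomp Require Import ring lra.
From Stdlib Require Import PeanoNat.
Import Order.TTheory GRing.Theory Num.Theory.
Local Open Scope classical_set_scope.
Local Open Scope ring_scope.

Definition bmf d (T : measurableType d) (R : realType) (f : T -> R) :=
  measurable_fun setT f /\ exists c : R, forall x, `|f x| <= c.
Arguments bmf {d T R} f.

Lemma posneg_pt {R : realType} (x : R) : x = Num.max x 0 - Num.max (- x) 0.
Proof.
rewrite /Num.max /Order.max /=.
by case: ifPn => h1; case: ifPn => h2; move: h1 h2; rewrite ?ltNge ?negbK => h1 h2; lra.
Qed.

Section gen.
Local Open Scope ereal_scope.
Context d (T : measurableType d) (R : realType) (mu : {measure set T -> \bar R}).

Lemma bm_int (f : T -> R) : mu setT < +oo -> bmf f -> mu.-integrable setT (EFin \o f).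
Proof.
move=> fin [mf [c hc]]; apply/integrableP; split; first exact/measurable_EFinP.
apply: (le_lt_trans (integral_le_bound (`|c|%:E) _ _ _ _)) => //.
- exact/measurable_EFinP.
- apply: aeW => x _ /=; rewrite lee_fin (le_trans (hc x)) //; exact: ler_norm.
- by rewrite lte_mul_pinfty.
Qed.

Lemma Rint_bound (f : T -> R) (c : R) : mu setT < +oo -> bmf f ->
  (forall x, `|f x| <= c)%R -> (`|Rintegral mu setT f| <= c * fine (mu setT))%R.
Proof.
move=> fin bf hc; have [mf _] := bf.
apply: (le_trans (le_normr_Rintegral _ _)) => //; first exact: bm_int.
rewrite -Rintegral_cst//; apply: le_Rintegral => //.
- apply: bm_int => //; split; first exact: measurableT_comp.
  by exists c => x; rewrite normr_id.
- apply: bm_int => //; split => //; exists `|c|%R => x //.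
Qed.
End gen.
Arguments bm_int {d T R mu f}.
Arguments Rint_bound {d T R mu f}.

Section kern.
Context d d' (X : measurableType d) (Y : measurableType d') (R : realType).
Variable l : R.-fker X ~> Y.

Lemma kfin x : (l x setT < +oo)%E.
Proof. by have [r hr] := measure_uub l; exact: (lt_trans (hr x) (ltry r)). Qed.

Lemma kint_meas (k : X * Y -> R) : (forall z, 0 <= k z) -> measurable_fun setT k ->
  measurable_fun setT (fun x => Rintegral (l x) setT (fun y => k (x, y))).
Proof.
move=> k0 mk.
apply: (measurableT_comp (fine_measurable _)) => //.
apply: (measurable_fun_integral_finite_kernel (EFin \o k) l).
- by move=> z; rewrite lee_fin.
- exact/measurable_EFinP.
Qed.

Lemma kint_bm (h : Y -> R) : bmf h -> bmf (fun x => Rintegral (l x) setT h).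
Proof.
move=> bh; have [mh [c hc]] := bh; split.
  have -> : (fun x => Rintegral (l x) setT h) =
     (fun x => Rintegral (l x) setT (fun y => (h^\+ (x, y).2))
             - Rintegral (l x) setT (fun y => (h^\- (x, y).2))).
    apply/funext => x; rewrite -RintegralB //.
    - by apply: eq_Rintegral => y _ /=; rewrite {1}(posneg_pt (h y)).
    - apply: bm_int; first exact: kfin.
      split; first exact: measurable_funrpos.
      exists `|c| => y; rewrite /funrpos.
      rewrite ger0_norm ?le_max ?lexx ?orbT // ge_max normr_ge0 andbT.
      by rewrite (le_trans (ler_norm _)) // (le_trans (hc y)) // ler_norm.
    - apply: bm_int; first exact: kfin.
      split; first exact: measurable_funrneg.
      exists `|c| => y; rewrite /funrneg.
      rewrite ger0_norm ?le_max ?lexx ?orbT // ge_max normr_ge0 andbT.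
      by rewrite (le_trans (ler_norm _)) // normrN (le_trans (hc y)) // ler_norm.
  apply: measurable_funB.
  - apply: (kint_meas (fun z => h^\+ z.2)).
    + by move=> z; exact: funrpos_ge0.
    + exact: measurableT_comp (measurable_funrpos mh) measurable_snd.
  - apply: (kint_meas (fun z => h^\- z.2)).
    + by move=> z; exact: funrneg_ge0.
    + exact: measurableT_comp (measurable_funrneg mh) measurable_snd.
have [r hr] := measure_uub l.
exists (`|c| * `|r|) => x.
apply: (le_trans (@Rint_bound _ _ _ _ _ `|c| _ _ _)) => //.
- exact: kfin.
- by move=> y; rewrite (le_trans (hc y)) // ler_norm.
rewrite ler_wpM2l //.
have h0 : (0 <= l x setT)%E by [].
have := hr x; move: h0; case: (l x setT) => //= s s0 sr.
by rewrite (le_trans _ (ler_norm r)) // ltW // -lte_fin.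
Qed.
End kern.
Arguments kfin {d d' X Y R} l x.
Arguments kint_meas {d d' X Y R} l {k}.
Arguments kint_bm {d d' X Y R} l {h}.
Section density.
Local Open Scope ereal_scope.
Context d (T : measurableType d) (R : realType).
Variables (mu nu : {measure set T -> \bar R}) (g0 : T -> R).
Hypothesis mg0 : measurable_fun setT g0.
Hypothesis g0ge0 : forall x, (0 <= g0 x)%R.
Hypothesis mu_dens : forall A, measurable A -> mu A = \int[nu]_(x in A) (g0 x)%:E.
Let g := EFin \o g0.
Import HBNNSimple.

Lemma dens_change (f : T -> \bar R) (E : set T) : (forall x, 0 <= f x) ->
    measurable E -> measurable_fun E f ->
  \int[nu]_(x in E) (f x * g x) = \int[mu]_(x in E) f x.
Proof.
move=> f0 mE mf.
have gge0 x : 0 <= g x by rewrite /g lee_fin.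
have mg : measurable_fun setT g by exact/measurable_EFinP.
pose h := nnsfun_approx mE mf.
have -> : \int[mu]_(x in E) f x =
    lim (\int[mu]_(x in E) (EFin \o h n) x @[n --> \oo]).
  have fE x : E x -> f x = lim ((EFin \o h n) x @[n --> \oo]).
    by move=> Ex; apply/esym/cvg_lim => //; exact: cvg_nnsfun_approx.
  under eq_integral => x /[!inE] /fE -> //.
  apply: monotone_convergence => //.
  - move=> n; apply/measurable_EFinP.
    by apply: (measurable_funS measurableT) => //; exact/measurable_funP.
  - by move=> n x Ex //=; rewrite lee_fin.
  - by move=> x Ex a b ab; rewrite lee_fin; exact/lefP/nd_nnsfun_approx.
have -> : \int[nu]_(x in E) (f \* g) x =
    lim (\int[nu]_(x in E) ((EFin \o h n) \* g) x @[n --> \oo]).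
  have fg x : E x -> f x * g x = lim (((EFin \o h n) \* g) x @[n --> \oo]).
    by move=> Ex; apply/esym/cvg_lim => //; apply: cvgeZr;
      [by []|exact: cvg_nnsfun_approx].
  under eq_integral => x /[!inE] /fg -> //.
  apply: monotone_convergence => [//| | |].
  - move=> n; apply/emeasurable_funM; apply/measurable_funTS.
      exact/measurable_EFinP.
    exact: mg.
  - by move=> n x Ex /=; rewrite mule_ge0 ?lee_fin.
  - by move=> x Ex a b ab/=; rewrite lee_wpmul2r ?lee_fin//; exact/lefP/nd_nnsfun_approx.
suff suf n : \int[nu]_(x in E) ((EFin \o h n) x * g x) =
    \int[mu]_(x in E) (EFin \o h n) x.
  by under eq_fun do rewrite suf.
transitivity (\int[mu]_(x in E)
   (\sum_(y \in range (h n)) (y * \1_(h n @^-1` [set y]) x)%:E)); last first.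
  by apply: eq_integral => t tE; rewrite /= fimfunE -fsumEFin.
have indich m r : measurable_fun E (fun x => (r * \1_(h m @^-1` [set r]) x)%:E).
  by apply: (measurable_comp measurableT) => //; exact: measurable_funM.
rewrite ge0_integral_fsum//; last by move=> m y Ey; exact: nnfun_muleindic_ge0.
transitivity (\int[nu]_(x in E) (\sum_(y \in range (h n))
    (y * \1_(h n @^-1` [set y]) x)%:E * g x)).
  under [RHS]eq_integral => x xE.
    rewrite -ge0_mule_fsuml => [|y]; last exact: nnfun_muleindic_ge0.
    rewrite fsumEFin // -(fimfunE _ x); over.
  by [].
rewrite ge0_integral_fsum//; last 2 first.
  - move=> y; apply: emeasurable_funM => //; apply: measurable_funTS.
    exact: mg.
  - by move=> m y Ey; rewrite mule_ge0 ?gge0// nnfun_muleindic_ge0.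
apply: eq_fsbigr => r rhn.
under [RHS]eq_integral do rewrite EFinM.
rewrite integralZl_indic_nnsfun => //.
under eq_integral do rewrite EFinM -muleA.
rewrite ge0_integralZl//.
- under eq_integral do rewrite muleC.
  rewrite (eq_integral (g \_ (h n @^-1` [set r]))); last first.
    by move=> x xE; rewrite epatch_indic.
  by rewrite -integral_mkcondr -mu_dens// integral_indic// setIC.
- apply: emeasurable_funM; first exact/measurable_EFinP.
  exact/measurable_funTS/mg.
- by move=> t Et; rewrite mule_ge0 ?lee_fin.
- by move: rhn; rewrite inE => -[t _ <-]; rewrite lee_fin.
Qed.
End density.

Section densR.
Context d (T : measurableType d) (R : realType).
Variables (mu nu : {measure set T -> \bar R}) (g0 : T -> R).
Hypothesis mg0 : measurable_fun setT g0.
Hypothesis g0ge0 : forall x, (0 <= g0 x)%R.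
Hypothesis g0bd : exists c, forall x, g0 x <= c.
Hypothesis mu_dens : forall A, measurable A -> mu A = (\int[nu]_(x in A) (g0 x)%:E)%E.
Hypothesis finmu : (mu setT < +oo)%E.
Hypothesis finnu : (nu setT < +oo)%E.

Lemma bm_pos {G : T -> R} : bmf G -> bmf G^\+.
Proof.
move=> [mG [c hc]]; split; first exact: measurable_funrpos.
exists `|c| => y; rewrite /funrpos.
rewrite ger0_norm ?le_max ?lexx ?orbT // ge_max normr_ge0 andbT.
by rewrite (le_trans (ler_norm _)) // (le_trans (hc y)) // ler_norm.
Qed.

Lemma bm_neg {G : T -> R} : bmf G -> bmf G^\-.
Proof.
move=> [mG [c hc]]; split; first exact: measurable_funrneg.
exists `|c| => y; rewrite /funrneg.
rewrite ger0_norm ?le_max ?lexx ?orbT // ge_max normr_ge0 andbT.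
by rewrite (le_trans (ler_norm _)) // normrN (le_trans (hc y)) // ler_norm.
Qed.

Lemma bm_g0M {G : T -> R} : bmf G -> bmf (fun x => g0 x * G x).
Proof.
move=> [mG [c hc]]; have [c0 hc0] := g0bd; split.
  exact: measurable_funM.
exists (`|c0| * `|c|) => x; rewrite normrM ler_pM //.
  by rewrite ger0_norm // (le_trans (hc0 x)) // ler_norm.
by rewrite (le_trans (hc x)) // ler_norm.
Qed.

Lemma dens_nonneg (G : T -> R) : (forall x, 0 <= G x) -> bmf G ->
  Rintegral nu setT (fun x => g0 x * G x) = Rintegral mu setT G.
Proof.
move=> G0 [mG _]; rewrite /Rintegral; congr fine.
rewrite -(@dens_change _ _ _ mu nu g0 mg0 g0ge0 mu_dens (EFin \o G) setT) //.
- by apply: eq_integral => x _ /=; rewrite -EFinM mulrC.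
- exact/measurable_EFinP.
Qed.

Lemma dens_Rint (G : T -> R) : bmf G ->
  Rintegral nu setT (fun x => g0 x * G x) = Rintegral mu setT G.
Proof.
move=> bG.
have -> : Rintegral mu setT G = Rintegral mu setT (fun x => G^\+ x - G^\- x).
  by apply: eq_Rintegral => x _; rewrite {1}(posneg_pt (G x)).
have -> : Rintegral nu setT (fun x => g0 x * G x) =
    Rintegral nu setT (fun x => g0 x * G^\+ x - g0 x * G^\- x).
  by apply: eq_Rintegral => x _; rewrite {1}(posneg_pt (G x)) mulrBr.
have i1 := @bm_int _ _ _ mu _ finmu (bm_pos bG).
have i2 := @bm_int _ _ _ mu _ finmu (bm_neg bG).
have i3 := @bm_int _ _ _ nu _ finnu (bm_g0M (bm_pos bG)).
have i4 := @bm_int _ _ _ nu _ finnu (bm_g0M (bm_neg bG)).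
rewrite (RintegralB _ i1 i2) // (RintegralB _ i3 i4) //.
rewrite (dens_nonneg G^\+) ?(dens_nonneg G^\-) //.
all: try exact: bm_neg; try exact: bm_pos.
all: by move=> x; first [exact: funrneg_ge0|exact: funrpos_ge0].
Qed.
End densR.

Lemma alg_ratio (R : realType) (a b c : R) : c != 0 -> (a / c) / (b / c) = a / b.
Proof.
move=> c0; have [->|b0] := eqVneq b 0; first by rewrite !mul0r !invr0 !mulr0.
by field; rewrite c0 b0.
Qed.

Lemma alg_term (R : realType) (a b C c : R) : c != 0 ->
  (a / a) * (b / a) / (C / a) ^+ 2 = (a / c) * (b / c) / (C / c) ^+ 2.
Proof.
move=> c0; have [->|a0] := eqVneq a 0; first by rewrite !(mul0r, invr0, mulr0).
have [->|C0] := eqVneq C 0; first by rewrite !(mul0r, expr0n, invr0, mulr0).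
by field; rewrite c0 a0 C0.
Qed.

Lemma bmM d (T : measurableType d) (R : realType) (f g : T -> R) :
  bmf f -> bmf g -> bmf (fun x => f x * g x).
Proof.
move=> [mf [cf hf]] [mg [cg hg]]; split; first exact: measurable_funM.
exists (`|cf| * `|cg|) => x; rewrite normrM ler_pM //.
  by rewrite (le_trans (hf x)) // ler_norm.
by rewrite (le_trans (hg x)) // ler_norm.
Qed.

Section Main.
Variables (R : realType) (d : nat -> measure_display)
  (X : forall n, measurableType (d n))
  (chi : {finite_measure set X 0%N -> \bar R})
  (nu : probability (X 0%N) R)
  (L : forall n, R.-fker (X n) ~> (X n.+1))
  (P : forall n, R.-pker (X n) ~> (X n.+1))
  (wm1 : XT X 0 -> R)
  (theta : forall n, XT X n -> R)
  (w : forall n, XT X n -> XT X n.+1 -> R).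
Hypothesis hwm_m : measurable_fun setT wm1.
Hypothesis hwm_ge0 : forall x, 0 <= wm1 x.
Hypothesis hwm_bd : exists c : R, forall x, wm1 x <= c.
Hypothesis hchi : forall A : set (X 0), measurable A ->
     chi A = (\int[nu]_(x in A) (wm1 x)%:E)%E.
Hypothesis hth_m : forall n, measurable_fun setT (theta n).
Hypothesis hth_pos : forall n x, 0 < theta n x.
Hypothesis hth_bd : forall n, exists c : R, forall x, theta n x <= c.
Hypothesis hw_m : forall n, measurable_fun setT (fun p : X n * X n.+1 => w n p.1 p.2).
Hypothesis hw_ge0 : forall n x y, 0 <= w n x y.
Hypothesis hw_bd : forall n, exists c : R, forall x y, w n x y / theta n x <= c.
Hypothesis hLP : forall n (h : X n.+1 -> R), measurable_fun setT h ->
     (exists c : R, forall y, `|h y| <= c) ->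
     forall x, (\int[L n x]_y (h y)%:E = \int[P n x]_y (w n x y * h y)%:E)%E.

Lemma th_neq0 n x : theta n x != 0.
Proof. by rewrite gt_eqF. Qed.

Lemma th_bm n : bmf (theta n : X n -> R).
Proof.
split; first exact: hth_m.
have [c hc] := hth_bd n; exists c => x; rewrite ger0_norm; [exact: hc| exact/ltW/hth_pos].
Qed.

Lemma LF_bm n (F : X n.+1 -> R) : bmf F -> bmf (LF L n F : X n -> R).
Proof. by move=> bF; have := kint_bm (L n) bF. Qed.

Lemma Lgap_bm j k (F : X (Nat.add j k) -> R) : bmf F ->
  bmf (Lgap (XT X) (LF L) j k F : X k -> R).
Proof. by elim: j F => [|j IH] F bF //=; apply: IH; exact: LF_bm. Qed.

Lemma Lfrom_bm k n (F : X n -> R) : bmf F ->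
  bmf (Lfrom (XT X) (LF L) k n F : X k -> R).
Proof.
move=> bF; rewrite /Lfrom; case: Nat.eq_dec => [e|_]; last first.
  by split; [exact: measurable_cst| exists 0 => x; rewrite normr0].
apply: Lgap_bm; move: (Nat.add (Nat.sub n k) k) e => N e.
by subst N.
Qed.


Lemma Lbar_step n (F : X n.+1 -> R) (xb : barX X n) : bmf F ->
  Lbar P wm1 theta w n
    (fun yb => F (snd2 X n.+1 yb) / theta n.+1 (snd2 X n.+1 yb)) xb
  = LF L n F (snd2 X n xb) / theta n (snd2 X n xb).
Proof.
move=> bF; rewrite /Lbar /LF; set x := snd2 X n xb.
have -> : (\int[P n x]_y
     (gbar X wm1 theta w n.+1 ((x, y) : barX X n.+1) *
      (F (snd2 X n.+1 ((x, y) : barX X n.+1)) /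
       theta n.+1 (snd2 X n.+1 ((x, y) : barX X n.+1))))%:E)%E =
   (\int[P n x]_y (w n x y * (F y / theta n x))%:E)%E.
  apply: eq_integral => y _ /=; congr (_%:E).
  by field; rewrite !th_neq0.
have [mF [c hc]] := bF.
rewrite -hLP; last first.
  exists (`|c| / theta n x) => y; rewrite normrM ler_pM //.
    by rewrite (le_trans (hc y)) // ler_norm.
  by rewrite ger0_norm // invr_ge0 ltW.
  by apply: measurable_funM => //; exact: measurable_cst.
have := @RintegralZr _ _ _ (L n x) setT F (theta n x)^-1 measurableT.
rewrite /Rintegral => ->//.
exact: (bm_int (kfin (L n) x) bF).
Qed.


Lemma Lgap_bar j k (F : X (Nat.add j k) -> R) : bmf F ->
  Lgap (barX X) (Lbar P wm1 theta w) j k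
    (fun yb => F (snd2 X (Nat.add j k) yb) / theta (Nat.add j k) (snd2 X (Nat.add j k) yb))
  = fun xb => Lgap (XT X) (LF L) j k F (snd2 X k xb) / theta k (snd2 X k xb).
Proof.
elim: j F => [|j IH] F bF //=.
rewrite -IH; last exact: LF_bm.
congr (Lgap _ _ _ _); apply/funext => xb.
exact: Lbar_step.
Qed.

Lemma Lfrom_bar k n (F : X n -> R) : bmf F ->
  Lfrom (barX X) (Lbar P wm1 theta w) k n
    (fun yb => F (snd2 X n yb) / theta n (snd2 X n yb))
  = fun xb => Lfrom (XT X) (LF L) k n F (snd2 X k xb) / theta k (snd2 X k xb).
Proof.
move=> bF; rewrite /Lfrom; case: Nat.eq_dec => [e|_]; last first.
  by apply/funext => xb; rewrite mul0r.
move: (Nat.sub n k) e => j e; subst n.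
exact: Lgap_bar.
Qed.

Lemma chi_fin : (chi setT < +oo)%E.
Proof. exact: fin_num_fun_lty (fin_num_measure chi). Qed.

Lemma nu_fin : (nu setT < +oo)%E.
Proof. by rewrite probability_setT ltry. Qed.

Lemma chibar_eq (G : X 0 -> R) : bmf G ->
  chibar nu wm1 theta w (fun x => G x / theta 0 x) = chiF chi G.
Proof.
move=> bG; rewrite /chibar /chiF.
have -> : (\int[nu]_x (gbar X wm1 theta w 0 x * (G x / theta 0 x))%:E)%E =
          (\int[nu]_x (wm1 x * G x)%:E)%E.
  apply: eq_integral => x _ /=; congr (_%:E).
  by field; rewrite th_neq0.
exact: (@dens_Rint _ _ _ chi nu wm1 hwm_m hwm_ge0 hwm_bd hchi chi_fin nu_fin G bG).
Qed.

Lemma EB m (F : X m -> R) : bmf F ->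
  FKeta (barX X) (chibar nu wm1 theta w) (Lbar P wm1 theta w) m
    (fun xb => F (snd2 X m xb) / theta m (snd2 X m xb))
  = chiF chi (Lfrom (XT X) (LF L) 0 m F) / chiF chi (Lfrom (XT X) (LF L) 0 m (theta m)).
Proof.
move=> bF; rewrite /FKeta Lfrom_bar //.
have -> : (fun _ : barX X m => 1) =
    (fun yb => theta m (snd2 X m yb) / theta m (snd2 X m yb)).
  by apply/funext => yb; rewrite divff // th_neq0.
rewrite Lfrom_bar; last exact: th_bm.
rewrite !chibar_eq //; [exact: Lfrom_bm (th_bm m)|exact: Lfrom_bm].
Qed.


Lemma inv_meas n : measurable_fun setT (fun x : X n => (theta n x)^-1).
Proof.
have -> : (fun x : X n => (theta n x)^-1) = (fun x => expR (- ln (theta n x))).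
  by apply/funext => x; rewrite expRN lnK // posrE.
apply: measurableT_comp; first exact: measurable_expR.
apply: measurableT_comp; first exact: oppr_measurable.
apply: measurableT_comp; first exact: measurable_ln.
exact: hth_m.
Qed.

Lemma w_bd n : exists c, 0 <= c /\ forall x y, w n x y <= c * theta n x.
Proof.
have [c0 hc] := hw_bd n; exists `|c0|; split => // x y.
have := hc x y; rewrite ler_pdivrMr // => h.
apply: (le_trans h); apply: ler_wpM2r; [exact/ltW/hth_pos | exact: ler_norm].
Qed.

Lemma L_bd n : exists r, forall x, fine (L n x setT) <= r.
Proof.
have [r hr] := measure_uub (L n); exists `|r| => x.
have h0 : (0 <= L n x setT)%E by [].
have := hr x; move: h0; case: (L n x setT) => //= s s0 sr.
by rewrite (le_trans _ (ler_norm r)) // ltW // -lte_fin.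
Qed.

Lemma wH_bm m x (H : X m.+1 -> R) : bmf H ->
  bmf (fun y => w m x y * H y ^+ 2) /\
  exists c, 0 <= c /\ forall y, `|w m x y * H y ^+ 2| <= c * theta m x.
Proof.
move=> [mH [cH hH]]; have [c [c0 hc]] := w_bd m.
have hH' y : `|H y ^+ 2| <= `|cH| ^+ 2.
  rewrite normrX; apply: lerXn2r => //; rewrite ?nnegrE //.
  by rewrite (le_trans (hH y)) // ler_norm.
have hb y : `|w m x y * H y ^+ 2| <= c * `|cH| ^+ 2 * theta m x.
  rewrite normrM ger0_norm // mulrAC; apply: ler_pM.
  - exact: hw_ge0.
  - exact: normr_ge0.
  - exact: hc.
  - exact: hH'.
split; last by exists (c * `|cH| ^+ 2); split => //; rewrite mulr_ge0.
split; last by exists (c * `|cH| ^+ 2 * theta m x).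
apply: measurable_funM.
  exact: (measurableT_comp (hw_m m) (pair1_measurable x)).
exact: measurable_funX.
Qed.

Lemma Lbar_sig m (H : X m.+1 -> R) (xb : barX X m) : bmf H ->
  Lbar P wm1 theta w m
    (fun yb => gbar X wm1 theta w m.+1 yb *
       (H (snd2 X m.+1 yb) / theta m.+1 (snd2 X m.+1 yb)) ^+ 2) xb
  = ((theta m (snd2 X m xb))^-1 *
      LF L m (fun y => w m (snd2 X m xb) y * (H y) ^+ 2) (snd2 X m xb))
    / theta m (snd2 X m xb).
Proof.
move=> bH; rewrite /Lbar /LF; set x := snd2 X m xb.
have -> : (\int[P m x]_y
     (gbar X wm1 theta w m.+1 ((x, y) : barX X m.+1) *
      (gbar X wm1 theta w m.+1 ((x, y) : barX X m.+1) *
      (H (snd2 X m.+1 ((x, y) : barX X m.+1)) /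
       theta m.+1 (snd2 X m.+1 ((x, y) : barX X m.+1))) ^+ 2))%:E)%E =
   (\int[P m x]_y (w m x y * (w m x y * H y ^+ 2 * (theta m x ^+ 2)^-1))%:E)%E.
  apply: eq_integral => y _ /=; congr (_%:E).
  by field; rewrite !th_neq0.
have [[mwH _] [c [c0 hc]]] := wH_bm m x H bH.
rewrite -hLP; last first.
  exists (c * theta m x / theta m x ^+ 2) => y; rewrite normrM.
  have t2 : 0 <= (theta m x ^+ 2)^-1 by rewrite invr_ge0 exprn_ge0 // ltW.
  rewrite [`|(_ ^+ 2)^-1|]ger0_norm //.
  by apply: ler_wpM2r => //; exact: hc.
  by apply: measurable_funM => //; exact: measurable_cst.
have := @RintegralZr _ _ _ (L m x) setT (fun y => w m x y * H y ^+ 2)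
   (theta m x ^+ 2)^-1 measurableT.
rewrite /Rintegral => ->//; last first.
  exact: (bm_int (kfin (L m) x) (wH_bm m x H bH).1).
by field; rewrite th_neq0.
Qed.

Lemma K_bm m (H : X m.+1 -> R) : bmf H ->
  bmf (fun x : X m => (theta m x)^-1 * LF L m (fun y => w m x y * (H y) ^+ 2) x).
Proof.
move=> bH; split.
  apply: measurable_funM; first exact: inv_meas.
  have k0 : forall z : X m * X m.+1, 0 <= w m z.1 z.2 * H z.2 ^+ 2.
    by move=> z; rewrite mulr_ge0 // sqr_ge0.
  have mk : measurable_fun setT (fun z : X m * X m.+1 => w m z.1 z.2 * H z.2 ^+ 2).
    apply: measurable_funM; first exact: hw_m.
    apply: (measurableT_comp (f := fun y => H y ^+ 2)); last exact: measurable_snd.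
    by apply: measurable_funX; case: bH.
  exact (kint_meas (L m) k0 mk).
have [r hr] := L_bd m.
have [c [c0 hc]] := w_bd m.
have [_ [cH hH]] := bH.
exists (c * `|cH| ^+ 2 * `|r|) => x.
have hH' y : `|H y ^+ 2| <= `|cH| ^+ 2.
  rewrite normrX; apply: lerXn2r => //; rewrite ?nnegrE //.
  by rewrite (le_trans (hH y)) // ler_norm.
have hb y : `|w m x y * H y ^+ 2| <= c * `|cH| ^+ 2 * theta m x.
  rewrite normrM ger0_norm // mulrAC; apply: ler_pM.
  - exact: hw_ge0.
  - exact: normr_ge0.
  - exact: hc.
  - exact: hH'.
have := Rint_bound _ (kfin (L m) x) (wH_bm m x H bH).1 hb.
rewrite /Rintegral => hI.
have tx := hth_pos m x.
rewrite normrM ger0_norm ?invr_ge0 ?(ltW tx) //.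
have f0 : 0 <= fine (L m x setT) by rewrite fine_ge0.
apply: (le_trans (ler_wpM2l _ hI)); first by rewrite invr_ge0 ltW.
have -> : (theta m x)^-1 * (c * `|cH| ^+ 2 * theta m x * fine (L m x setT))
   = c * `|cH| ^+ 2 * fine (L m x setT) by field; rewrite th_neq0.
apply: ler_wpM2l; first by rewrite mulr_ge0 // exprn_ge0.
exact: le_trans (hr x) (ler_norm r).
Qed.


Hypothesis hpos : forall n, 0 < chiF chi (Lfrom (XT X) (LF L) 0 n (fun _ => 1)).

Lemma c_neq0 n : chiF chi (Lfrom (XT X) (LF L) 0 n (fun _ => 1)) != 0.
Proof. by rewrite gt_eqF // hpos. Qed.

Lemma chibar_eq0 (G : X 0 -> R) : bmf G ->
  chibar nu wm1 theta w (fun x => G (snd2 X 0 x) / theta 0 (snd2 X 0 x)) = chiF chi G.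
Proof. exact: chibar_eq. Qed.

Lemma chibar_sq (G : X 0 -> R) : bmf G ->
  chibar nu wm1 theta w (fun x => gbar X wm1 theta w 0 x *
     (G (snd2 X 0 x) / theta 0 (snd2 X 0 x)) ^+ 2)
  = chiF chi (fun x => wm1 x * G x ^+ 2).
Proof.
move=> bG.
have bw : bmf (wm1 : X 0 -> R).
  split => //; have [c hc] := hwm_bd; exists c => x; rewrite ger0_norm //.
rewrite -chibar_eq; last by apply: bmM => //; apply: bmM.
congr (chibar _ _ _ _); apply/funext => x /=.
by field; rewrite th_neq0.
Qed.

Definition Kf m (H : X m.+1 -> R) (x : X m) : R :=
  (theta m x)^-1 * LF L m (fun y => w m x y * H y ^+ 2) x.

Lemma T2 m (H : X m.+1 -> R) : bmf H ->
  (fun x : barX X m => 1^-1 * Lbar P wm1 theta w m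
      (fun y => gbar X wm1 theta w m.+1 y *
         (H (snd2 X m.+1 y) / theta m.+1 (snd2 X m.+1 y)) ^+ 2) x)
  = fun x => Kf m H (snd2 X m x) / theta m (snd2 X m x).
Proof.
move=> bH; apply/funext => x; rewrite Lbar_sig // invr1 mul1r //.
Qed.

Lemma part1 m (f : XT X m -> R) :
  measurable_fun setT (f : X m -> R) -> (exists c : R, forall x, `|f x| <= c) ->
     FKeta (barX X) (chibar nu wm1 theta w) (Lbar P wm1 theta w) m
       (fun xb => f (snd2 X m xb))
     = FKeta (XT X) (chiF chi) (LF L) m (fun x => theta m x * f x)
       / FKeta (XT X) (chiF chi) (LF L) m (theta m).
Proof.
move=> mf bf.
have bf' : bmf (f : X m -> R) by [].
have btf : bmf (fun x : X m => theta m x * f x) by apply: bmM => //; exact: th_bm.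
rewrite (_ : (fun xb => f (snd2 X m xb)) = fun xb =>
   (fun x => theta m x * f x) (snd2 X m xb) / theta m (snd2 X m xb)); last first.
  by apply/funext => xb /=; field; rewrite th_neq0.
apply: etrans (@EB m _ btf) _; rewrite /FKeta alg_ratio //; exact: c_neq0.
Qed.

Lemma part2 n : (forall x, theta n x = 1) ->
   forall h : XT X n -> R,
     measurable_fun setT (h : X n -> R) -> (exists c : R, forall x, `|h x| <= c) ->
     FKeta (barX X) (chibar nu wm1 theta w) (Lbar P wm1 theta w) n
       (fun xb => h (snd2 X n xb))
       = FKeta (XT X) (chiF chi) (LF L) n h
     /\
     forall l, (l <= n)%N ->
       FKsigma2 (barX X) (chibar nu wm1 theta w) (Lbar P wm1 theta w)
         (gbar X wm1 theta w 0) (fun m _ => 1)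
         (fun m _ yb => gbar X wm1 theta w m.+1 yb) l n
         (fun xb => h (snd2 X n xb))
       = FKsigma2 (XT X) (chiF chi) (LF L) wm1 theta w l n h.
Proof.
move=> h1 h mh bh.
have bh' : bmf (h : X n -> R) by [].
have et : theta n = fun _ => 1 by apply/funext.
have hbar : (fun xb => h (snd2 X n xb)) =
    fun xb => h (snd2 X n xb) / theta n (snd2 X n xb).
  by apply/funext => xb; rewrite h1 divr1.
have heta : FKeta (barX X) (chibar nu wm1 theta w) (Lbar P wm1 theta w) n
       (fun xb => h (snd2 X n xb)) = FKeta (XT X) (chiF chi) (LF L) n h.
  by rewrite hbar EB // et.
split => // l hl.
rewrite /FKsigma2 heta.
set hc := (fun x0 : XT X n => h x0 - FKeta (XT X) (chiF chi) (LF L) n h).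
have bhc : bmf (hc : X n -> R).
  have [_ [c hc']] := bh'; split.
    by apply: measurable_funB => //; exact: measurable_cst.
  exists (c + `|FKeta (XT X) (chiF chi) (LF L) n h|) => x.
  by rewrite /hc (le_trans (ler_normB _ _)) // lerD2r.
have hcE : (fun x0 : barX X n => h (snd2 X n x0) - FKeta (XT X) (chiF chi) (LF L) n h)
   = fun yb => hc (snd2 X n yb) / theta n (snd2 X n yb).
  by apply/funext => yb; rewrite h1 divr1.
have one : (fun _ : barX X n => 1) = fun yb => theta n (snd2 X n yb) / theta n (snd2 X n yb).
  by apply/funext => yb; rewrite divff // th_neq0.
rewrite hcE one.
congr (_ + _).
  case: eqP => // _.
  rewrite !Lfrom_bar //; last exact: th_bm.
  rewrite chibar_sq; last exact: Lfrom_bm.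
  rewrite chibar_eq0; last by apply: Lfrom_bm; exact: th_bm.
  by rewrite et.
apply: eq_big_nat => m /andP[_ hm].
have oneM : (fun _ : barX X m => 1) = fun yb => theta m (snd2 X m yb) / theta m (snd2 X m yb).
  by apply/funext => yb; rewrite divff // th_neq0.
have bH : bmf (Lfrom (XT X) (LF L) m.+1 n hc : X m.+1 -> R) by exact: Lfrom_bm.
rewrite oneM (Lfrom_bar m.+1 n hc bhc) (Lfrom_bar m n (theta n) (th_bm n)) T2 //.
rewrite !EB //; last exact: th_bm; last exact: K_bm; last by apply: Lfrom_bm; exact: th_bm.
rewrite et /FKeta; apply: alg_term; exact: c_neq0.
Qed.

End Main.

Theorem mainTheorem9 (R : realType) (d : nat -> measure_display)
  (X : forall n, measurableType (d n))
  (chi : {finite_measure set X 0%N -> \bar R})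
  (nu : probability (X 0%N) R)
  (L : forall n, R.-fker (X n) ~> (X n.+1))
  (P : forall n, R.-pker (X n) ~> (X n.+1))
  (wm1 : XT X 0 -> R)
  (theta : forall n, XT X n -> R)
  (w : forall n, XT X n -> XT X n.+1 -> R) :
  (* w_{-1} = d chi / d nu, bounded *)
  measurable_fun setT wm1 ->
  (forall x, 0 <= wm1 x) ->
  (exists c : R, forall x, wm1 x <= c) ->
  (forall A : set (X 0), measurable A ->
     chi A = (\int[nu]_(x in A) (wm1 x)%:E)%E) ->
  (* adjustment multipliers: measurable, positive, bounded *)
  (forall n, measurable_fun setT (theta n)) ->
  (forall n x, 0 < theta n x) ->
  (forall n, exists c : R, forall x, theta n x <= c) ->
  (* weights: measurable, nonnegative, w_n / theta_n bounded *)
  (forall n, measurable_fun setT (fun p : X n * X n.+1 => w n p.1 p.2)) ->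
  (forall n x y, 0 <= w n x y) ->
  (forall n, exists c : R, forall x y, w n x y / theta n x <= c) ->
  (* L_n(x, dy) = w_n(x, y) P_n(x, dy) *)
  (forall n (h : X n.+1 -> R), measurable_fun setT h ->
     (exists c : R, forall y, `|h y| <= c) ->
     forall x, (\int[L n x]_y (h y)%:E = \int[P n x]_y (w n x y * h y)%:E)%E) ->
  (* normalising constants positive *)
  (forall n, 0 < chiF chi (Lfrom (XT X) (LF L) 0 n (fun _ => 1))) ->
  (* general identity, m >= 1 *)
  (forall m, (0 < m)%N -> forall f : XT X m -> R,
     measurable_fun setT (f : X m -> R) -> (exists c : R, forall x, `|f x| <= c) ->
     FKeta (barX X) (chibar nu wm1 theta w) (Lbar P wm1 theta w) m
       (fun xb => f (snd2 X m xb))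
     = FKeta (XT X) (chiF chi) (LF L) m (fun x => theta m x * f x)
       / FKeta (XT X) (chiF chi) (LF L) m (theta m))
  /\
  (forall n, (forall x, theta n x = 1) ->
   forall h : XT X n -> R,
     measurable_fun setT (h : X n -> R) -> (exists c : R, forall x, `|h x| <= c) ->
     FKeta (barX X) (chibar nu wm1 theta w) (Lbar P wm1 theta w) n
       (fun xb => h (snd2 X n xb))
       = FKeta (XT X) (chiF chi) (LF L) n h
     /\
     forall l, (l <= n)%N ->
       FKsigma2 (barX X) (chibar nu wm1 theta w) (Lbar P wm1 theta w)
         (gbar X wm1 theta w 0) (fun m _ => 1)
         (fun m _ yb => gbar X wm1 theta w m.+1 yb) l n
         (fun xb => h (snd2 X n xb))
       = FKsigma2 (XT X) (chiF chi) (LF L) wm1 theta w l n h).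
Proof.
move=> H1 H2 H3 H4 H5 H6 H7 H8 H9 H10 H11 H12.
split.
  move=> m _ f mf bf.
  by apply: part1.
move=> n hn h mh bh.
by apply: part2.
Qed.
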